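(* Let $A$ and $B$ be rings, $f: A\to B$ a ring homomorphism and $J$ a proper ideal of $B$ such that $J$ is semicommutative. If $A$ is a weak Armendariz ring, then $A\bowtie^{f}J$ is a weak Armendariz ring.
   Context: All rings are associative with identity (not necessarily commutative), ring homomorphisms are unital, and ideals are two-sided. $\mathrm{nil}(R)$ denotes the set of nilpotent elements of a ring $R$. For a ring homomorphism $f:A\to B$ and an ideal $J$ of $B$, the amalgamation is the subring $A\bowtie^{f}J=\{(a,f(a)+j)\mid a\in A,\ j\in J\}$ of $A\times B$. A ring $R$ (possibly without identity, e.g. an ideal regarded as a ring) is semicommutative if for all $a,b\in R$, $ab=0$ implies $aRb=0$. A ring $R$ is weak Armendariz if whenever $p(x)=\sum_{i=0}^n a_ix^i$ and $q(x)=\sum_{j=0}^m b_jx^j$ in $R[x]$ satisfy $p(x)q(x)=0$, then $a_ib_j\in\mathrm{nil}(R)$ for all $i,j$. *)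

(* Defs.v *)
From HB Require Import structures.
From mathcomp Require Import all_boot all_order all_algebra.
From mathcomp Require Import ring_quotient.
Set Implicit Arguments. Unset Strict Implicit. Unset Printing Implicit Defensive.
Import GRing.Theory.
Local Open Scope ring_scope.

Definition nilpotentr (R : nzRingType) (x : R) : Prop := exists n : nat, x ^+ n = 0.

(* weak Armendariz ring: p q = 0 in R[x] implies a_i b_j nilpotent for all i, j
   (coefficients of index >= size are 0, hence trivially nilpotent). *)
Definition weak_armendariz (R : nzRingType) : Prop :=
  forall p q : {poly R}, p * q = 0 -> forall i j : nat, nilpotentr (p`_i * q`_j).

(* semicommutative subset (ideal regarded as a ring without identity) *)
Definition semicommutative_on (R : nzRingType) (J : {pred R}) : Prop :=
  forall a b, a \in J -> b \in J -> a * b = 0 -> forall r, r \in J -> a * r * b = 0.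

(* Two-sided proper ideals: MathComp's [idealr] (additive subgroup, closed under
   left multiplication, 1 \notin J) plus closure under right multiplication. *)
HB.mixin Record isRightIdealClosed (R : nzRingType) (S : R -> bool) := {
  rideal_closed_subproof : forall a, {in S, forall u, u * a \in S}
}.

#[short(type="twoSidedProperIdeal")]
HB.structure Definition TwoSidedProperIdeal (R : nzRingType) :=
  {S of Idealr R S & isRightIdealClosed R S}.

Section Amalgamation.
Variables (A B : nzRingType) (f : {rmorphism A -> B}) (J : twoSidedProperIdeal B).

Definition amalg_pred : {pred A * B} := [pred x : A * B | x.2 - f x.1 \in J].

Lemma amalg_subring_closed : subring_closed amalg_pred.
Proof.
have J0 : (0 : B) \in J by exact: rpred0.
have lJ : forall a u, u \in J -> a * u \in J.
  by move=> a u uJ; case: (@proper_ideal_subproof B J) => _ /(_ a u uJ).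
have rJ : forall a u, u \in J -> u * a \in J.
  by move=> a u uJ; exact: rideal_closed_subproof.
split.
- by rewrite inE /= rmorph1 subrr.
- move=> [x1 x2] [y1 y2]; move=> hx hy; rewrite !inE /= in hx hy *.
  rewrite rmorphB.
  have -> : x2 - y2 - (f x1 - f y1) = (x2 - f x1) - (y2 - f y1).
    by rewrite !opprB addrACA [RHS]addrACA (addrC (- y2)).
  by rewrite rpredB.
- move=> [x1 x2] [y1 y2]; move=> hx hy; rewrite !inE /= in hx hy *.
  rewrite rmorphM.
  have -> : x2 * y2 - f x1 * f y1
          = (x2 - f x1) * y2 + f x1 * (y2 - f y1).
    by rewrite mulrBl mulrBr addrA addrNK.
  by apply: rpredD; [apply: rJ | apply: lJ].
Qed.

HB.instance Definition _ :=
  GRing.isSubringClosed.Build (A * B)%type amalg_pred amalg_subring_closed.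

Record amalgamation := Amalg { amalg_val : A * B; _ : amalg_val \in amalg_pred }.

HB.instance Definition _ := [isSub for amalg_val].
HB.instance Definition _ := [Choice of amalgamation by <:].
HB.instance Definition _ := [SubChoice_isSubNzRing of amalgamation by <:].

End Amalgamation.

(* Main.v *)
Require Import Defs.
From HB Require Import structures.
From mathcomp Require Import all_boot all_order all_algebra.
From mathcomp Require Import ring_quotient.
From mathcomp Require Import zify.
Local Open Scope ring_scope.
Import GRing.Theory.

Section NilJ.
Variables (B : nzRingType) (J : twoSidedProperIdeal B).
Hypothesis hsc : semicommutative_on J.

Lemma lJ (a u : B) : u \in J -> a * u \in J.
Proof. by move=> uJ; case: (@proper_ideal_subproof B J) => _ /(_ a u uJ). Qed.
Lemma rJ (a u : B) : u \in J -> u * a \in J.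
Proof. by move=> uJ; exact: rideal_closed_subproof. Qed.

Definition SJ (x : B) : Prop := x \in J \/ x = 1.

Lemma SJ1 : SJ 1. Proof. by right. Qed.
Lemma SJ_J x : x \in J -> SJ x. Proof. by left. Qed.
Lemma SJM x y : SJ x -> SJ y -> SJ (x * y).
Proof.
case=> [xJ|->] [yJ|->].
- by left; exact: rJ.
- by rewrite mulr1; left.
- by rewrite mul1r; left.
- by rewrite mulr1; right.
Qed.
Lemma SJX x n : SJ x -> SJ (x ^+ n).
Proof. by move=> hx; elim: n => [|n IH]; [rewrite expr0; exact: SJ1|rewrite exprS; apply: SJM]. Qed.

Lemma SJsc u v r : SJ u -> SJ v -> SJ r -> u * v = 0 -> u * r * v = 0.
Proof.
move=> [uJ|->] [vJ|->] [rJ'|->] huv; first by apply: hsc.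
all: rewrite ?mulr1 ?mul1r in huv *; rewrite ?huv ?mulr0 ?mul0r //.
by move/eqP: huv; rewrite oner_eq0.
Qed.

Section Fixa.
Variable a : B.
Hypothesis aJ : a \in J.

Inductive V : nat -> B -> Prop :=
| V0 : V 0 1
| VS k w r : V k w -> SJ r -> V k.+1 (w * r * a).

Lemma V_SJ k w : V k w -> SJ w.
Proof. elim=> [|k' w' r _ IH hr]; first exact: SJ1. by apply: SJM; [apply: SJM|apply: SJ_J]. Qed.

Lemma gap k : forall c, SJ c -> a ^+ k * c = 0 -> forall w, V k w -> w * c = 0.
Proof.
elim: k => [|k IH] c hc hk w hw.
  by inversion hw; subst; rewrite expr0 mul1r in hk; rewrite hk mulr0.
inversion hw; subst.
have hac : SJ (a * c) by apply: SJ_J; apply: rJ.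
have := IH (a * c) hac; rewrite mulrA -exprSr => /(_ hk _ H0) h.
rewrite -mulrA; apply: SJsc => //.
by apply: (@V_SJ k w0).
Qed.

Inductive Sm (k : nat) : B -> Prop :=
| Sm0 : Sm k 0
| SmD x y : Sm k x -> Sm k y -> Sm k (x + y)
| SmT w s : V k w -> SJ s -> Sm k (w * s).

Lemma Sm_vanish m : a ^+ m = 0 -> forall x, Sm m x -> x = 0.
Proof.
move=> ham x; elim=> [|x' y' _ -> _ ->|w s hw hs]; rewrite ?addr0 //.
by apply: (@gap m s hs _ w hw); rewrite ham mul0r.
Qed.

Lemma SmMr k x z : Sm k x -> SJ z -> Sm k (x * z).
Proof.
move=> hx hz; elim: hx => [|x' y' _ h1 _ h2|w s hw hs].
- rewrite mul0r; exact: Sm0.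
- rewrite mulrDl; exact: SmD.
- rewrite -mulrA; apply: SmT => //; exact: SJM.
Qed.

Lemma SmM k x z : Sm k x -> Sm 1 z -> Sm k.+1 (x * z).
Proof.
move=> hx; elim: hx z => [|x' y' _ h1 _ h2|w s hw hs] z hz.
- rewrite mul0r; exact: Sm0.
- rewrite mulrDl; apply: SmD; [exact: h1|exact: h2].
- elim: hz => [|x2 y2 _ g1 _ g2|w1 s1 hw1 hs1].
  + rewrite mulr0; exact: Sm0.
  + rewrite mulrDr; exact: SmD.
  + inversion hw1; subst. inversion H0; subst.
    have -> : w * s * (1 * r * a * s1) = (w * (s * r) * a) * s1.
      by rewrite mul1r !mulrA.
    apply: SmT => //; apply: VS => //; exact: SJM.
Qed.

Lemma Sm_pow z m : Sm 1 z -> Sm m (z ^+ m).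
Proof.
move=> hz; elim: m => [|m IH].
  rewrite expr0 -(mulr1 1); apply: SmT; [exact: V0|exact: SJ1].
rewrite exprSr; exact: SmM.
Qed.

Lemma Sm1_l y : SJ y -> Sm 1 (y * a).
Proof.
move=> hy; rewrite -(mulr1 (y * a)) -{1}(mul1r y); apply: SmT; [apply: VS => //; exact: V0|exact: SJ1].
Qed.

Lemma Sm1_r y : SJ y -> Sm 1 (a * y).
Proof.
move=> hy; have -> : a * y = (1 * 1 * a) * y by rewrite !mul1r.
apply: SmT => //; apply: VS; [exact: V0|exact: SJ1].
Qed.

Lemma Sm1_nil m z : a ^+ m = 0 -> Sm 1 z -> z ^+ m = 0.
Proof. by move=> ham hz; apply: (@Sm_vanish m ham); apply: Sm_pow. Qed.

Lemma sum_decomp b : b \in J -> forall k, exists t, Sm 1 t /\ (a + b) ^+ k = b ^+ k + t.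
Proof.
move=> bJ; elim=> [|k [t [ht e]]].
  exists 0; split; [exact: Sm0|by rewrite !expr0 addr0].
exists (b ^+ k * a + t * (a + b)); split.
  apply: SmD; first by apply: Sm1_l; apply: SJX; exact: SJ_J.
  by apply: SmMr => //; apply: SJ_J; exact: rpredD.
by rewrite exprSr e exprSr mulrDl mulrDr !addrA (addrC (b^+k * a)).
Qed.
End Fixa.

Definition NJ (x : B) : Prop := x \in J /\ exists n, x ^+ n = 0.

Lemma NJ0 : NJ 0. Proof. by split; [exact: rpred0|exists 1%N; rewrite expr1]. Qed.

Lemma NJD x y : NJ x -> NJ y -> NJ (x + y).
Proof.
move=> [xJ [m hm]] [yJ [n hn]]; split; first exact: rpredD.
have [t [ht e]] := @sum_decomp x xJ y yJ n.
exists (n * m)%N; rewrite exprM e hn add0r.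
exact: (@Sm1_nil _ xJ _ _ hm).
Qed.

Lemma NJN x : NJ x -> NJ (- x).
Proof.
move=> [xJ [m hm]]; split; first by rewrite -mulN1r; exact: lJ.
by exists m; rewrite exprNn hm mulr0.
Qed.

Lemma NJL x y : NJ x -> y \in J -> NJ (y * x).
Proof.
move=> [xJ [m hm]] yJ; split; first exact: lJ.
exists m; apply: (@Sm1_nil _ xJ _ _ hm); apply: Sm1_l; exact: SJ_J.
Qed.

Lemma NJR x y : NJ x -> y \in J -> NJ (x * y).
Proof.
move=> [xJ [m hm]] yJ; split; first exact: rJ.
exists m; apply: (@Sm1_nil _ xJ _ _ hm); apply: Sm1_r; exact: SJ_J.
Qed.

Lemma NJsq x : x \in J -> NJ (x * x) -> NJ x.
Proof. by move=> xJ [_ [n hn]]; split=> //; exists (2 * n)%N; rewrite exprM expr2. Qed.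

Lemma NJflip x y : x \in J -> y \in J -> NJ (x * y) -> NJ (y * x).
Proof.
move=> xJ yJ h; apply: NJsq; first exact: lJ.
have -> : y * x * (y * x) = y * (x * y) * x by rewrite !mulrA.
by apply: NJR => //; apply: NJL.
Qed.

Lemma NJgap x y r : x \in J -> y \in J -> r \in J -> NJ (x * y) -> NJ (x * r * y).
Proof.
move=> xJ yJ rJ' h; apply: NJsq; first by apply: lJ.
have -> : x * r * y * (x * r * y) = x * r * (y * x) * r * y by rewrite !mulrA.
apply: NJR => //; apply: NJR => //; apply: NJL; last exact: rJ.
exact: NJflip.
Qed.

Lemma NJsum (I : Type) (s : seq I) (P : pred I) (F : I -> B) :
  (forall i, P i -> NJ (F i)) -> NJ (\sum_(i <- s | P i) F i).
Proof.
move=> h; apply: (big_ind NJ); [exact: NJ0|exact: NJD|exact: h].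
Qed.

Lemma inner (P Q : {poly B}) : (forall i, P`_i \in J) -> (forall j, Q`_j \in J) ->
  P * Q = 0 -> forall i j, NJ (P`_i * Q`_j).
Proof.
move=> PJ QJ PQ.
have step : forall k, (forall i j, (i + j < k)%N -> NJ (P`_i * Q`_j)) ->
    forall l, (l <= k)%N -> NJ (P`_l * Q`_(k - l)).
  move=> k IH l hl.
  have ck : \sum_(i < k.+1) P`_i * Q`_(k - i) = 0 by rewrite -coefM PQ coef0.
  rewrite (bigD1 (Ordinal (hl : (l < k.+1)%N))) //= in ck.
  have ex : P`_l * Q`_(k - l) = - \sum_(i < k.+1 | i != Ordinal (hl : (l < k.+1)%N)) P`_i * Q`_(k - i).
    by apply/eqP; rewrite -subr_eq0 opprK ck.
  apply: NJsq; first exact: rJ.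
  rewrite {2}ex mulrN; apply: NJN; rewrite mulr_sumr; apply: NJsum.
  move=> [i hi] /= hne.
  have hne' : i != l by apply: contra hne => /eqP e; apply/eqP; apply: val_inj.
  rewrite !mulrA.
  case: (ltngtP i l) hne' => // hil _.
  -
    rewrite -(mulrA (P`_l)); apply: NJR => //; apply: NJL => //.
    apply: NJflip => //; apply: IH; lia.
  - rewrite -(mulrA (P`_l)); apply: NJgap => //; first by apply: lJ.
    apply: IH; lia.
have all : forall k i j, (i + j < k)%N -> NJ (P`_i * Q`_j).
  elim=> [|k IH] i j hij; first by [].
  case: (ltnP (i + j) k) => h; first exact: IH.
  have -> : j = (i + j - i)%N by lia.
  have -> : (i + j)%N = k by lia.
  apply: step => //; lia.
by move=> i j; apply: (all (i + j).+1).
Qed.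
End NilJ.

Theorem theorem4p1 (A B : nzRingType) (f : {rmorphism A -> B})
    (J : twoSidedProperIdeal B) :
  semicommutative_on J ->
  weak_armendariz A ->
  weak_armendariz (amalgamation f J).
Proof.
move=> hsc hA p q pq i j.
pose R := amalgamation f J.
pose phi1 : {rmorphism R -> A} := (fst \o (val : R -> (A*B)%type)).
pose phi2 : {rmorphism R -> B} := (snd \o (val : R -> (A*B)%type)).
have memR : forall x : R, phi2 x - f (phi1 x) \in J by move=> x; exact: (valP x).
have zeroR : forall x : R, phi1 x = 0 -> phi2 x = 0 -> x = 0.
  move=> x h1 h2; apply: val_inj; rewrite /= [val x]surjective_pairing.
  by move: h1 h2; rewrite /phi1 /phi2 /= => -> ->.
have P1 : map_poly phi1 p * map_poly phi1 q = 0 by rewrite -rmorphM pq rmorph0.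
have P2 : map_poly phi2 p * map_poly phi2 q = 0 by rewrite -rmorphM pq rmorph0.
have [n hn] := hA _ _ P1 i j.
rewrite !coef_map in hn.
set u := phi2 p`_i * phi2 q`_j.
have uJ : u ^+ n \in J.
  have := memR ((p`_i * q`_j) ^+ n).
  by rewrite (rmorphXn phi1) (rmorphM phi1) hn rmorph0 subr0 (rmorphXn phi2) (rmorphM phi2).
pose s := u ^+ n.
have hPJ : forall k, (s%:P * map_poly phi2 p)`_k \in J by move=> k; rewrite coefCM; exact: rJ.
have hQJ : forall k, (map_poly phi2 q * s%:P)`_k \in J by move=> k; rewrite coefMC; exact: lJ.
have PQ : (s%:P * map_poly phi2 p) * (map_poly phi2 q * s%:P) = 0.
  by rewrite mulrA -(mulrA _ (map_poly phi2 p)) P2 mulr0 mul0r.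
have [_ [m hm]] := @inner B J hsc _ _ hPJ hQJ PQ i j.
rewrite coefCM coefMC !coef_map in hm.
have e : s * phi2 p`_i * (phi2 q`_j * s) = u ^+ (2 * n).+1.
  by rewrite /s mulrA -(mulrA (u ^+ n)) -/u -exprSr -exprD; congr (_ ^+ _); lia.
rewrite e in hm.
exists (n + (2 * n).+1 * m)%N; apply: zeroR.
- by rewrite rmorphXn rmorphM exprD hn mul0r.
- by rewrite rmorphXn rmorphM -/u exprD exprM hm mulr0.
Qed.
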